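(* Let $A\in\mathbb{R}^{n\times m}$ with $n\ge 2$ be such that the DSR graph $G_{A,A^t}$ is steady. (i) If each column of $A$ has at most two nonzero entries, then for every $B\in\mathcal{Q}_0(A^t)$, both $AB$ and $(AB)^{[2]}$ are $P_0$-matrices, and $AB$ is positive semistable. (ii) If each row of $A$ has at most two nonzero entries, then for every $B\in\mathcal{Q}_0(A^t)$, $AB$ is positive semistable.
   Context: For $M\in\mathbb{R}^{n\times m}$, $\mathcal{Q}(M)$ is the set of matrices with the same entrywise sign pattern as $M$, and $\mathcal{Q}_0(M)$ its closure. A square real matrix is a $P_0$-matrix if all principal minors are nonnegative; it is positive semistable if all its eigenvalues have nonnegative real part. For $M\in\mathbb{R}^{n\times n}$, $M^{[2]}$ is the second additive compound: the matrix of $u\wedge v\mapsto Mu\wedge v+u\wedge Mv$ on $\Lambda^2\mathbb{R}^n$ in the lexicographically ordered basis $e_i\wedge e_j$, $i<j$. DSR graphs: for $A\in\mathbb{R}^{n\times m}$, $B\in\mathbb{R}^{m\times n}$, $G_{A,B}$ is the signed, labelled bipartite digraph with S-vertices $S_1,\dots,S_n$ and R-vertices $R_1,\dots,R_m$, having an arc $R_j\to S_i$ of sign $\mathrm{sign}(A_{ij})$ iff $A_{ij}\ne0$, and an arc $S_i\to R_j$ of sign $\mathrm{sign}(B_{ji})$ iff $B_{ji}\ne0$. Antiparallel arcs between the same pair of vertices with the same sign are regarded as a single undirected edge. An edge arising from $A_{ij}\ne0$ (R-to-S or undirected) has label $|A_{ij}|$; an edge with only S-to-R orientation has label $\infty$.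 A cycle is a nonempty closed walk (traversing edges consistently with their orientations) repeating no vertex except first$=$last. A cycle $(e_1,\dots,e_{2r})$ is an s-cycle if all labels are finite and $\prod_{i=1}^r l(e_{2i-1})=\prod_{i=1}^r l(e_{2i})$. A DSR graph is steady if all of its cycles are s-cycles. *)

(* Defs.v *)
From HB Require Import structures.
From mathcomp Require Import all_boot all_order all_algebra.
From mathcomp Require Import complex.
From mathcomp Require Import reals.
Set Implicit Arguments. Unset Strict Implicit. Unset Printing Implicit Defensive.
Import Order.TTheory GRing.Theory Num.Theory.
Local Open Scope ring_scope.

Section Defs.
Variable R : realType.

Definition signQ (p q : nat) (M N : 'M[R]_(p, q)) : Prop :=
  forall i j, Num.sg (N i j) = Num.sg (M i j).
(* Q_0(M): closure of Q(M), i.e. matrices whose every entry is either 0 or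
   has the sign of the corresponding entry of M *)
Definition signQ0 (p q : nat) (M N : 'M[R]_(p, q)) : Prop :=
  forall i j, N i j = 0 \/ Num.sg (N i j) = Num.sg (M i j).

Definition principal_submx (k : nat) (M : 'M[R]_k) (S : {set 'I_k}) :
    'M[R]_#|S| :=
  mxsub (fun a : 'I_#|S| => enum_val a) (fun a : 'I_#|S| => enum_val a) M.

Definition P0_matrix (k : nat) (M : 'M[R]_k) : Prop :=
  forall S : {set 'I_k}, 0 <= \det (principal_submx M S).

Definition pos_semistable (k : nat) (M : 'M[R]_k) : Prop :=
  forall z : R[i], eigenvalue (map_mx (real_complex R) M) z -> 0 <= complex.Re z.

(* index set of the basis e_i /\ e_j, i < j, of Lambda^2 R^k; the finType
   enumeration of this subtype of 'I_k * 'I_k is lexicographic *)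
Definition idx2 (k : nat) := {p : 'I_k * 'I_k | (p.1 < p.2)%N}.

(* coefficient on e_i /\ e_j of  M e_k' /\ e_l + e_k' /\ M e_l *)
Definition compound2_entry (k : nat) (M : 'M[R]_k) (a b : idx2 k) : R :=
  let: (i, j) := val a in let: (k', l) := val b in
  (if l == j then M i k' else 0) - (if l == i then M j k' else 0)
  + (if k' == i then M j l else 0) - (if k' == j then M i l else 0).

Definition compound2 (k : nat) (M : 'M[R]_k) : 'M[R]_#|{: idx2 k}| :=
  \matrix_(a, b) compound2_entry M (enum_val a) (enum_val b).

(* vertices: inl i = S_(i+1), inr j = R_(j+1) *)
Definition dsr_vtx (n m : nat) := ('I_n + 'I_m)%type.

(* [dsr_trav A B u v] = None if no edge of G_{A,B} can be traversed from u
   to v; Some l if one can, where l is its label (Some x = finite label x,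
   None = infinity).  Between an ordered pair of vertices at most one edge
   can be traversed in that direction:
   - S_i -> R_j : the arc from B_ji <> 0; it is merged with the arc
     R_j -> S_i into an undirected edge (label |A_ij|) iff A_ij <> 0 and
     sign A_ij = sign B_ji, otherwise it is an S-to-R arc (label infinity);
   - R_j -> S_i : the arc (or undirected edge) from A_ij <> 0, label |A_ij|. *)
Definition dsr_trav (n m : nat) (A : 'M[R]_(n, m)) (B : 'M[R]_(m, n))
    (u v : dsr_vtx n m) : option (option R) :=
  match u, v with
  | inl i, inr j =>
      if B j i != 0 then
        Some (if (A i j != 0) && (Num.sg (A i j) == Num.sg (B j i))
              then Some `|A i j| else None)
      else None
  | inr j, inl i => if A i j != 0 then Some (Some `|A i j|) else None
  | _, _ => None
  end.

Definition dsr_cycle (n m : nat) (A : 'M[R]_(n, m)) (B : 'M[R]_(m, n))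
    (k : nat) (c : 'I_k -> dsr_vtx n m) : Prop :=
  (0 < k)%N /\ injective c /\ forall t : 'I_k, dsr_trav A B (c t) (c (ordS t)) != None.

(* label of the t-th edge of the cycle (0 if infinite or absent) *)
Definition dsr_cycle_label (n m : nat) (A : 'M[R]_(n, m)) (B : 'M[R]_(m, n))
    (k : nat) (c : 'I_k -> dsr_vtx n m) (t : 'I_k) : R :=
  odflt 0 (odflt None (dsr_trav A B (c t) (c (ordS t)))).

Definition dsr_s_cycle (n m : nat) (A : 'M[R]_(n, m)) (B : 'M[R]_(m, n))
    (k : nat) (c : 'I_k -> dsr_vtx n m) : Prop :=
  (forall t : 'I_k, exists x : R, dsr_trav A B (c t) (c (ordS t)) = Some (Some x)) /\
  \prod_(t < k | ~~ odd t) dsr_cycle_label A B c t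
    = \prod_(t < k | odd t) dsr_cycle_label A B c t.

Definition dsr_steady (n m : nat) (A : 'M[R]_(n, m)) (B : 'M[R]_(m, n)) : Prop :=
  forall (k : nat) (c : 'I_k -> dsr_vtx n m), dsr_cycle A B c -> dsr_s_cycle A B c.

End Defs.

(* Main.v *)
Require Import Defs.
From HB Require Import structures.
From mathcomp Require Import all_boot all_order all_algebra.
From mathcomp Require Import complex.
From mathcomp Require Import reals.
From mathcomp Require Import zify ring lra.
Set Implicit Arguments. Unset Strict Implicit. Unset Printing Implicit Defensive.
Import Order.TTheory GRing.Theory Num.Theory.
Local Open Scope ring_scope.

Section Potential.
Variable R : realFieldType.
Variable V : finType.
Variable e : rel V.
Variable w : V -> V -> R.
Hypothesis e_sym : symmetric e.
Hypothesis w_pos : forall x y, e x y -> 0 < w x y.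
Hypothesis w_inv : forall x y, e x y -> w y x = (w x y)^-1.

Fixpoint wprod (x : V) (s : seq V) : R :=
  if s is y :: s' then w x y * wprod y s' else 1.

Lemma wprod_cat x s t : wprod x (s ++ t) = wprod x s * wprod (last x s) t.
Proof. by elim: s x => [|y s IH] x /=; rewrite ?mul1r // IH mulrA. Qed.

Lemma wprod_rcons x s y : wprod x (rcons s y) = wprod x s * w (last x s) y.
Proof. by rewrite -cats1 wprod_cat /= mulr1. Qed.

Lemma wprod_nth d x s :
  wprod x s = \prod_(t < size s) w (nth d (x :: s) t) (nth d s t).
Proof.
elim: s x => [|y s IH] x /=; first by rewrite big_ord0.
by rewrite big_ord_recl /= IH.
Qed.

Lemma wprod_gt0 x s : path e x s -> 0 < wprod x s.
Proof.
elim: s x => [|y s IH] x /=; first by rewrite ltr01.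
by case/andP=> exy ps; rewrite mulr_gt0 ?w_pos ?IH.
Qed.

Lemma not_uniq_split (s : seq V) : ~~ uniq s ->
  exists s1 z s2 s3, s = s1 ++ z :: s2 ++ z :: s3.
Proof.
elim: s => [|a s IH] //=; rewrite negb_and negbK.
case/orP=> [ain|nu].
  by case/splitPr: ain => p1 p2; exists [::], a, p1, p2.
by have [s1 [z [s2 [s3 ->]]]] := IH nu; exists (a :: s1), z, s2, s3.
Qed.

Hypothesis Hcyc : forall x s, path e x (rcons s x) -> uniq (rcons s x) ->
  wprod x (rcons s x) = 1.

Lemma closed_walk (n : nat) : forall x s, (size s <= n)%N -> path e x s -> last x s = x ->
  wprod x s = 1.
Proof.
elim: n => [|n IH] x s.
  by rewrite leqn0 => /nilP -> .
move=> sz ps ls.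
have [us|nus] := boolP (uniq s).
  case/lastP: s sz ps ls us => [|s' y] //= sz ps ls us.
  by rewrite last_rcons in ls; subst y; apply: Hcyc.
have [s1 [z [s2 [s3 eqs]]]] := not_uniq_split nus.
move: ps ls sz; rewrite eqs cat_path /= cat_path /= last_cat /= last_cat /= size_cat /= size_cat /=.
move=> /andP[p1 /andP[e1 /andP[p2 /andP[e2 p3]]]] ls sz.
have h1 : wprod z (rcons s2 z) = 1.
  apply: IH; first by rewrite size_rcons; lia.
    by rewrite rcons_path p2.
  by rewrite last_rcons.
have h2 : wprod x (s1 ++ z :: s3) = 1.
  apply: IH; first by rewrite size_cat /=; lia.
    by rewrite cat_path p1 /= e1.
  by rewrite last_cat.
rewrite wprod_rcons in h1.
rewrite wprod_cat /= wprod_cat /=.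
rewrite !wprod_cat /= in h2.
have -> : wprod x s1 * (w (last x s1) z * (wprod z s2 * (w (last z s2) z * wprod z s3)))
   = (wprod x s1 * (w (last x s1) z * wprod z s3)) * (wprod z s2 * w (last z s2) z) by ring.
by rewrite h2 h1 mulr1.
Qed.

Lemma last_rev_belast (x : V) (t : seq V) : last (last x t) (rev (belast x t)) = x.
Proof.
elim: t x => [|y t IH] x //=.
by rewrite rev_cons last_rcons.
Qed.

Lemma wprod_rev x t : path e x t ->
  wprod (last x t) (rev (belast x t)) = (wprod x t)^-1.
Proof.
elim: t x => [|y t IH] x /=; first by rewrite invr1.
case/andP=> exy pt.
by rewrite rev_cons wprod_rcons IH // last_rev_belast w_inv // invfM mulrC.
Qed.

Lemma walk_indep x s t : path e x s -> path e x t -> last x s = last x t ->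
  wprod x s = wprod x t.
Proof.
move=> ps pt lst.
have pr : path e (last x t) (rev (belast x t)).
  rewrite rev_path; apply: sub_path pt => a b /=; by rewrite e_sym.
have := @closed_walk (size (s ++ rev (belast x t))) x (s ++ rev (belast x t)) (leqnn _).
rewrite cat_path ps last_cat lst pr last_rev_belast => /(_ isT erefl).
rewrite wprod_cat lst wprod_rev // => h.
have t0 := wprod_gt0 pt.
by rewrite -[wprod x t]mul1r -h -mulrA mulVf ?mulr1 // gt_eqF.
Qed.

Lemma ex_walk y : exists s, path e (fingraph.root e y) s && (last (fingraph.root e y) s == y).
Proof.
have /connectP [s ps ls] : connect e (fingraph.root e y) y.
  by rewrite (@sym_connect_sym _ e e_sym) connect_root.
by exists s; rewrite ps -ls eqxx.
Qed.

Definition pot (y : V) : R := wprod (fingraph.root e y) (xchoose (ex_walk y)).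

Lemma pot_gt0 y : 0 < pot y.
Proof. by have /andP[p _] := xchooseP (ex_walk y); apply: wprod_gt0. Qed.

Lemma pot_edge x y : e x y -> pot y = pot x * w x y.
Proof.
move=> exy.
have rxy : fingraph.root e x = fingraph.root e y.
  have H := @fingraph.rootP _ e (sym_connect_sym e_sym) x y.
  by apply/H; apply: connect1.
have /andP[px /eqP lx] := xchooseP (ex_walk x).
have /andP[py /eqP ly] := xchooseP (ex_walk y).
rewrite /pot.
move: (xchoose (ex_walk x)) px lx => sx px lx.
move: (xchoose (ex_walk y)) py ly => sy py ly.
have -> : wprod (fingraph.root e x) sx * w x y
   = wprod (fingraph.root e x) (rcons sx y) by rewrite wprod_rcons lx.
rewrite rxy; apply: walk_indep => //.
  by rewrite -rxy rcons_path px lx exy.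
by rewrite last_rcons ly.
Qed.

End Potential.

Section DSR.
Variable R : realType.
Variables n m : nat.
Variable A : 'M[R]_(n, m).

Definition de (u v : dsr_vtx n m) : bool := dsr_trav A A^T u v != None.
Definition isS (u : dsr_vtx n m) : bool := if u is inl _ then true else false.
Definition wt (u v : dsr_vtx n m) : R :=
  match u, v with
  | inl i, inr j => `|A i j|
  | inr j, inl i => `|A i j|^-1
  | _, _ => 1
  end.
Definition lab (u v : dsr_vtx n m) : R := odflt 0 (odflt None (dsr_trav A A^T u v)).

Lemma de_lr i j : de (inl i) (inr j) = (A i j != 0).
Proof.
by rewrite /de /= mxE; case: (A i j != 0).
Qed.

Lemma de_rl i j : de (inr j) (inl i) = (A i j != 0).
Proof. by rewrite /de /=; case: (A i j != 0). Qed.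

Lemma de_sym : symmetric de.
Proof. by case=> [i|j] [i'|j'] //; rewrite de_lr de_rl. Qed.

Lemma de_prop u v : de u v ->
  [/\ 0 < lab u v, wt u v = (if isS u then lab u v else (lab u v)^-1) & isS v = ~~ isS u].
Proof.
case: u v => [i|j] [i'|j'] //.
  rewrite de_lr => nz; rewrite /lab /= mxE nz eqxx /=.
  by split; rewrite // normr_gt0.
rewrite de_rl => nz; rewrite /lab /= nz /=.
by split; rewrite // normr_gt0.
Qed.

Lemma wt_pos u v : de u v -> 0 < wt u v.
Proof.
by case/de_prop=> l0 -> _; case: ifP => _ //; rewrite invr_gt0.
Qed.

Lemma wt_inv u v : de u v -> wt v u = (wt u v)^-1.
Proof. by case: u v => [i|j] [i'|j'] //= _; rewrite invrK. Qed.

Lemma alt_prod (k : nat) (l : 'I_k -> R) (b : bool) :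
  (forall t, 0 < l t) ->
  \prod_(t < k | ~~ odd t) l t = \prod_(t < k | odd t) l t ->
  \prod_(t < k) (if b (+) odd t then l t else (l t)^-1) = 1.
Proof.
move=> lpos heq.
rewrite (bigID (fun t : 'I_k => odd t)) /=.
have pO : 0 < \prod_(t < k | odd t) l t by apply: prodr_gt0 => t _.
case: b.
  rewrite [X in X * _](eq_bigr (fun t => (l t)^-1)); last by move=> t; case: (odd t).
  rewrite [X in _ * X](eq_bigr (fun t => l t)); last by move=> t; case: (odd t).
  by rewrite prodfV heq mulVf // gt_eqF.
rewrite [X in X * _](eq_bigr (fun t => l t)); last by move=> t; case: (odd t).
rewrite [X in _ * X](eq_bigr (fun t => (l t)^-1)); last by move=> t; case: (odd t).
by rewrite prodfV heq mulfV // gt_eqF.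
Qed.

Hypothesis steady : dsr_steady A A^T.

Lemma dsr_Hcyc x s : path de x (rcons s x) -> uniq (rcons s x) ->
  wprod wt x (rcons s x) = 1.
Proof.
move=> ps us.
set k := size (rcons s x).
have kE : k = (size s).+1 by rewrite /k size_rcons.
set f := fun t : nat => nth x (x :: rcons s x) t.
have edge : forall t, (t < k)%N -> de (f t) (f t.+1).
  move=> t tk; have := (pathP x ps) t tk.
  by rewrite /f.
have altf : forall t, (t <= k)%N -> isS (f t) = isS x (+) odd t.
  elim=> [|t IH] tk; first by rewrite /= addbF.
  have [_ _ ->] := de_prop (edge t tk).
  by rewrite IH ?(ltnW tk) //= addbN.
pose c := fun t : 'I_k => f t.
have cS : forall t : 'I_k, c (ordS t) = f t.+1.
  move=> t; rewrite /c /f /=.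
  have tk := ltn_ord t.
  case: (ltnP t.+1 k) => h.
    by rewrite modn_small.
  have ts : val t = size s by apply/eqP; rewrite -eqSS -kE eqn_leq h tk.
  have -> : (t.+1 %% k = 0)%N by rewrite ts -kE modnn.
  by rewrite /= nth_rcons ts ltnn eqxx.
have uL : uniq (x :: s) by rewrite /= -rcons_uniq.
have cyc : dsr_cycle A A^T c.
  split; first by rewrite kE.
  split.
    move=> t1 t2; rewrite /c /f.
    have h : forall t : 'I_k, nth x (x :: rcons s x) t = nth x (x :: s) t.
      move=> t; rewrite -rcons_cons nth_rcons /= -kE ltn_ord //.
    have ht : forall t : 'I_k, (t < size (x :: s))%N by move=> t; rewrite /= -kE ltn_ord.
    rewrite !h => /eqP; rewrite nth_uniq ?ht // => /eqP.
    exact: val_inj.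
  by move=> t; rewrite cS; apply: edge.
have [_ hs] := steady cyc.
rewrite (wprod_nth wt x) -/k.
have -> : \prod_(t < k) wt (nth x (x :: rcons s x) t) (nth x (rcons s x) t)
   = \prod_(t < k) (if isS x (+) odd t then dsr_cycle_label A A^T c t
                    else (dsr_cycle_label A A^T c t)^-1).
  apply: eq_bigr => t _.
  have e1 := edge t (ltn_ord t).
  have [_ hw _] := de_prop e1.
  have -> : nth x (rcons s x) t = f t.+1 by [].
  have -> : nth x (x :: rcons s x) t = f t by [].
  rewrite hw altf; last exact: ltnW.
  by rewrite /dsr_cycle_label cS.
apply: alt_prod hs => t.
have [l0 _ _] := de_prop (edge t (ltn_ord t)).
by rewrite /dsr_cycle_label cS.
Qed.

Lemma steady_scalable : exists (rho : 'I_n -> R) (sig : 'I_m -> R),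
  [/\ forall i, 0 < rho i, forall j, 0 < sig j &
      forall i j, A i j != 0 -> `|A i j| * rho i * sig j = 1].
Proof.
pose p := pot wt de_sym.
have pg : forall y, 0 < p y := pot_gt0 de_sym wt_pos.
have pe : forall x y, de x y -> p y = p x * wt x y :=
  pot_edge de_sym wt_pos wt_inv dsr_Hcyc.
exists (fun i => p (inl i)), (fun j => (p (inr j))^-1).
split.
- by move=> i; apply: pg.
- by move=> j; rewrite invr_gt0; apply: pg.
move=> i j nz.
have ed : de (inl i) (inr j) by rewrite de_lr.
rewrite (pe _ _ ed) /=.
have pp := pg (inl i).
have ap : 0 < `|A i j| by rewrite normr_gt0.
by rewrite [X in X * _]mulrC mulfV // mulf_neq0 // gt_eqF.
Qed.

End DSR.

Section Wdom.
Variable R : realType.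

Definition Wdom (k : nat) (M : 'M[R]_k) (rho : 'I_k -> R) : Prop :=
  (forall i, 0 < rho i) /\
  forall j, \sum_(i | i != j) `|M i j| * rho i <= M j j * rho j.

Lemma sg_mul_abs (x y : R) : y = 0 \/ Num.sg y = Num.sg x -> x * y = `|x| * `|y|.
Proof.
case=> [->|h]; first by rewrite !mulr0 normr0 mulr0.
rewrite -normrM ger0_norm //.
have : 0 <= Num.sg (x * y) by rewrite sgrM h -expr2 sqr_ge0.
by rewrite sgr_ge0.
Qed.

Lemma W_AB n m (A : 'M[R]_(n, m)) (B : 'M[R]_(m, n)) (rho : 'I_n -> R) (sig : 'I_m -> R) :
  (forall i, 0 < rho i) -> (forall j, 0 < sig j) ->
  (forall i j, A i j != 0 -> `|A i j| * rho i * sig j = 1) ->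
  (forall j, #|[set i | A i j != 0%R]| <= 2)%N ->
  signQ0 A^T B -> Wdom (A *m B) rho.
Proof.
move=> rpos spos scal col sB; split => // j.
have sBk : forall k, B k j = 0 \/ Num.sg (B k j) = Num.sg (A j k).
  by move=> k; have := sB k j; rewrite mxE.
have key : forall k, `|B k j| * \sum_(i | i != j) `|A i k| * rho i
                     <= `|B k j| * (`|A j k| * rho j).
  move=> k; have [->|Bnz] := eqVneq (B k j) 0; first by rewrite normr0 !mul0r.
  have hs : Num.sg (B k j) = Num.sg (A j k).
    by case: (sBk k) => // b0; rewrite b0 eqxx in Bnz.
  have Anz : A j k != 0.
    by rewrite -sgr_eq0 -hs sgr_eq0.
  apply: ler_wpM2l; first exact: normr_ge0.
  set c := (sig k)^-1.
  have cE : forall i, A i k != 0 -> `|A i k| * rho i = c.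
    move=> i nz; rewrite /c -[in RHS](mul1r (sig k)^-1) -(scal i k nz).
    by rewrite mulfK // gt_eqF.
  rewrite (cE j Anz).
  rewrite (bigID (fun i => A i k != 0)) /=.
  rewrite [X in _ + X]big1 ?addr0; last first.
    by move=> i /andP[_]; rewrite negbK => /eqP ->; rewrite normr0 mul0r.
  set S := [set i | A i k != 0].
  rewrite (eq_bigr (fun _ => c)); last by move=> i /andP[_ nz]; apply: cE.
  have -> : \sum_(i | (i != j) && (A i k != 0)) c = \sum_(i in S :\ j) c.
    by apply: eq_bigl => i; rewrite !inE.
  rewrite sumr_const.
  have : (#|S :\ j| <= 1)%N.
    have := col k; rewrite (cardsD1 j S) inE Anz /= add1n ltnS //.
  have c0 : 0 <= c by rewrite /c invr_ge0 ltW.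
  by case: #|S :\ j| => [|[|q]] //= _; rewrite ?mulr0n ?mulr1n.
have -> : (A *m B) j j * rho j = \sum_k `|B k j| * (`|A j k| * rho j).
  rewrite mxE mulr_suml; apply: eq_bigr => k _.
  by rewrite (sg_mul_abs (sBk k)); ring.
apply: le_trans (ler_sum _ (fun k _ => key k)).
rewrite (eq_bigr (fun k => \sum_(i | i != j) `|B k j| * (`|A i k| * rho i)));
  last by move=> k _; rewrite mulr_sumr.
rewrite exchange_big /=; apply: ler_sum => i _.
rewrite mxE.
apply: le_trans (ler_wpM2r (ltW (rpos i)) (ler_norm_sum _ _ _)) _.
rewrite mulr_suml; apply: ler_sum => k _.
by rewrite normrM -mulrA mulrCA.
Qed.

End Wdom.

Section Gersh.
Variable R : realType.
Local Open Scope complex_scope.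

Definition nrm (w : R[i]) : R := Num.sqrt (complex.Re w ^+ 2 + complex.Im w ^+ 2).

Lemma nrmE (w : R[i]) : `|w| = (nrm w)%:C.
Proof. exact: normc_def. Qed.

Lemma nrm_ge0 w : 0 <= nrm w.
Proof. exact: sqrtr_ge0. Qed.

Lemma nrm_real (x : R) : nrm x%:C = `|x|.
Proof.
rewrite /nrm.
have -> : complex.Re x%:C = x by [].
have -> : complex.Im x%:C = 0 by [].
by rewrite [0 ^+ 2]expr2 mulr0 addr0 sqrtr_sqr.
Qed.

Lemma nrmM (x y : R[i]) : nrm (x * y) = nrm x * nrm y.
Proof. have h := normrM x y; rewrite !nrmE in h; apply: (@complexI R); rewrite rmorphM; exact: h. Qed.

Lemma nrm_gt0 w : w != 0 -> 0 < nrm w.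
Proof.
move=> wnz; rewrite lt_def nrm_ge0 andbT; apply: contra wnz => /eqP h.
by rewrite -normr_eq0 nrmE h.
Qed.

Lemma exists_argmax (I : finType) (i0 : I) (F : I -> R) :
  exists j, forall i, F i <= F j.
Proof.
by case: (@arg_maxP _ _ I i0 predT F isT) => j _ h; exists j => i; apply: h.
Qed.

Lemma gersh k (M : 'M[R]_k) (rho : 'I_k -> R) (z : R[i]) (v : 'rV[R[i]]_k) :
  Wdom M rho -> v != 0 -> v *m map_mx (real_complex R) M = z *: v ->
  0 <= complex.Re z.
Proof.
move=> [rpos W] vnz veq.
have [i0 vi0] : exists i, v 0 i != 0.
  case: (pickP (fun i => v 0 i != 0)) => [i h|h]; first by exists i.
  case/eqP: vnz; apply/rowP => i; rewrite mxE.
  by have := h i; move/negbFE/eqP.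
pose a := fun i => nrm (v 0 i).
have [j jmax] := exists_argmax i0 (fun i => a i / rho i).
set c := a j / rho j.
have ac : forall i, a i <= c * rho i.
  by move=> i; rewrite -ler_pdivrMr //; apply: jmax.
have c0 : 0 < c.
  have := ac i0; have := nrm_gt0 vi0; rewrite -/(a i0) => h1 h2.
  by rewrite -(pmulr_lgt0 _ (rpos i0)); apply: lt_le_trans h2.
have ajE : a j = c * rho j by rewrite /c divfK // gt_eqF.
have aj0 : 0 < a j by rewrite ajE mulr_gt0.
have ej := congr1 (fun X : 'rV[R[i]]_k => X 0 j) veq; rewrite /= !mxE in ej.
rewrite (bigD1 j) //= mxE in ej.
set d := M j j.
have h1 : (z - d%:C) * v 0 j = \sum_(i | i != j) v 0 i * (M i j)%:C.
  rewrite mulrBl -ej; under eq_bigr => i _ do rewrite mxE.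
  by rewrite mulrC; ring.
have h2 : nrm (z - d%:C) * a j <= \sum_(i | i != j) a i * `|M i j|.
  rewrite -lecR rmorphM /= -nrmE -nrmE -normrM h1 rmorph_sum /=.
  apply: le_trans (ler_norm_sum _ _ _) _.
  apply: ler_sum => i _.
  by rewrite normrM nrmE nrmE nrm_real rmorphM.
have h3 : \sum_(i | i != j) a i * `|M i j| <= d * a j.
  apply: (@le_trans _ _ (c * \sum_(i | i != j) `|M i j| * rho i)).
    rewrite mulr_sumr; apply: ler_sum => i _.
    rewrite mulrCA [a i * _]mulrC; apply: ler_wpM2l; [exact: normr_ge0 | exact: ac].
  rewrite ajE mulrCA; apply: ler_wpM2l; first exact: ltW.
  exact: W.
have h4 : nrm (z - d%:C) <= d.
  by rewrite -(ler_pM2r aj0); apply: le_trans h3.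
move: h4; case: z {veq ej h1 h2} => za zb /=.
rewrite /nrm /= subr0 => h4.
set X := (za - d) ^+ 2 + zb ^+ 2.
have X0 : 0 <= X by rewrite addr_ge0 // sqr_ge0.
have sq := sqr_sqrtr X0.
have s0 := sqrtr_ge0 X.
move: h4 sq s0; rewrite /X; set s := Num.sqrt _ => h4 sq s0.
nra.
Qed.

End Gersh.

Section DetW.
Variable R : realType.

Lemma gersh_real k (M : 'M[R]_k) rho (v : 'rV[R]_k) (mu : R) :
  Wdom M rho -> v != 0 -> v *m M = mu *: v -> 0 <= mu.
Proof.
move=> HW vnz veq.
have := @gersh R k M rho (real_complex R mu) (map_mx (real_complex R) v) HW.
rewrite map_mx_eq0 vnz => /(_ isT); apply.
by rewrite -map_mxM veq map_mxZ.
Qed.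

Lemma W_det_ge0 k (M : 'M[R]_k) rho : Wdom M rho -> 0 <= \det M.
Proof.
move=> HW; rewrite leNgt; apply/negP => dneg.
pose Pm : 'M[{poly R}]_k :=
  \matrix_(i, j) ((M i j)%:P * 'X + ((i == j)%:R)%:P * (1 - 'X)).
pose P := \det Pm.
have Pev : forall s, P.[s] = \det (s *: M + (1 - s) *: 1%:M).
  move=> s; rewrite -horner_evalE -det_map_mx; congr (\det _).
  apply/matrixP => i j; rewrite !mxE.
  change (((M i j)%:P * 'X + ((i == j)%:R)%:P * (1 - 'X)).[s] = s * M i j + (1 - s) * (i == j)%:R).
  by rewrite !hornerE; ring.
have P0 : P.[0] = 1 by rewrite Pev scale0r add0r subr0 scale1r det1.
have P1 : P.[1] = \det M by rewrite Pev subrr scale0r addr0 scale1r.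
have [x /andP[x0 x1]] : exists2 x, 0 <= x <= 1 & root (- P) x.
  apply: poly_ivt; first exact: ler01.
  by rewrite !hornerN P0 P1 lerN10 /= oppr_ge0 ltW.
rewrite rootE hornerN oppr_eq0 => /eqP Px.
have xn0 : x != 0 by apply: contra_eqN Px => /eqP ->; rewrite P0 oner_eq0.
have xn1 : x != 1.
  by apply: contra_eqN Px => /eqP ->; rewrite P1 lt_eqF.
have xpos : 0 < x by rewrite lt_def xn0 x0.
have xlt1 : x < 1 by rewrite lt_def eq_sym xn1 x1.
move: Px; rewrite Pev => /eqP /det0P [v vnz].
rewrite mulmxDr -!scalemxAr mulmx1 => /eqP; rewrite addr_eq0 => /eqP h.
have : v *m M = (- ((1 - x) / x)) *: v.
  apply: (@scalerI _ _ x); first exact: xn0.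
  by rewrite h scalerA mulrN mulrC divfK // scaleNr.
move/(gersh_real HW vnz); rewrite oppr_ge0 leNgt => /negP; apply.
by rewrite divr_gt0 // subr_gt0.
Qed.

Lemma W_sub k (M : 'M[R]_k) rho (S : {set 'I_k}) :
  Wdom M rho -> Wdom (principal_submx M S) (fun a => rho (enum_val a)).
Proof.
move=> [rpos W]; split => [a|b]; first exact: rpos.
rewrite /principal_submx !mxE.
apply: le_trans (W (enum_val b)).
have -> : \sum_(a | a != b) `|mxsub (fun a0 : 'I_#|S| => enum_val a0)
                            (fun a0 : 'I_#|S| => enum_val a0) M a b| * rho (enum_val a)
   = \sum_(i in S | i != enum_val b) `|M i (enum_val b)| * rho i.
  rewrite big_enum_val_cond; apply: eq_big => a.
    by rewrite (inj_eq enum_val_inj).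
  by rewrite mxE.
rewrite [X in _ <= X]big_mkcond [X in X <= _]big_mkcond /=.
apply: ler_sum => i _.
case: (i \in S) => //=; case: (i != _) => //.
by rewrite mulr_ge0 ?normr_ge0 ?ltW.
Qed.

Lemma W_P0 k (M : 'M[R]_k) rho : Wdom M rho -> P0_matrix M.
Proof. by move=> HW S; apply: W_det_ge0 (W_sub S HW). Qed.

End DetW.

Section Comp.
Variable R : realType.

Lemma sum_idx2 n (F : 'I_n -> 'I_n -> R) :
  \sum_(x : idx2 n) F (val x).1 (val x).2 =
  \sum_(i : 'I_n) \sum_(j : 'I_n) (if (i < j)%N then F i j else 0).
Proof.
rewrite pair_bigA /= -big_mkcond /=.
symmetry; rewrite (reindex_omap (val : idx2 n -> 'I_n * 'I_n) insub); last first.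
  by move=> p Pp; rewrite insubT.
apply: eq_bigl => -[p Pp] /=; by rewrite Pp insubT /= eqxx.
Qed.

Lemma pick1 (I : finType) (F : I -> R) l : (forall i, i != l -> F i = 0) ->
  \sum_i F i = F l.
Proof. by move=> h; rewrite (bigD1 l) //= big1 ?addr0. Qed.

Lemma split_ne n (g : 'I_n -> R) (l : 'I_n) :
  \sum_(i : 'I_n) (if (i < l)%N then g i else 0) + \sum_(i : 'I_n) (if (l < i)%N then g i else 0)
  = \sum_i g i - g l.
Proof.
rewrite -big_split /=.
have -> : g l = \sum_i (if i == l then g i else 0).
  by rewrite (pick1 (l := l)) ?eqxx // => i /negbTE ->.
rewrite -sumrB; apply: eq_bigr => i _.
case: (i =P l) => [->|ne]; first by rewrite ltnn subrr addr0.
case: ltngtP => h; rewrite ?subr0 ?addr0 ?add0r //.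
by case: ne; apply: val_inj.
Qed.

Lemma W_comp n (M : 'M[R]_n) rho : Wdom M rho ->
  Wdom (compound2 M) (fun a => rho (val (enum_val a)).1 * rho (val (enum_val a)).2).
Proof.
move=> [rpos W]; split => [a|b]; first by apply: mulr_gt0.
rewrite /compound2 mxE.
under eq_bigr => a _ do rewrite mxE.
set G := fun x : idx2 n => `|compound2_entry M x (enum_val b)| * (rho (val x).1 * rho (val x).2).
have -> : \sum_(a | a != b) `|compound2_entry M (enum_val a) (enum_val b)| *
     (rho (val (enum_val a)).1 * rho (val (enum_val a)).2)
   = \sum_(x : idx2 n | x != enum_val b) G x.
  rewrite big_mkcond [RHS]big_mkcond /=.
  symmetry; rewrite (big_enum_val (A := {: idx2 n}) (fun x => if x != enum_val b then G x else 0)).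
  by apply: eq_bigr => a _; rewrite (inj_eq enum_val_inj).
rewrite {}/G.
move: (enum_val b) => be.
case: be => -[k l] /= hkl.
have lk : (l == k) = false by apply/eqP => e; have := hkl; rewrite e ltnn.
have kl : (k == l) = false by apply/eqP => e; have := hkl; rewrite e ltnn.
set b0 := exist _ (k, l) hkl.
pose B (i j : 'I_n) : R :=
  (if l == j then `|M i k| else 0) + (if l == i then `|M j k| else 0) +
  (if k == i then `|M j l| else 0) + (if k == j then `|M i l| else 0).
pose fB (x : idx2 n) := rho (val x).1 * rho (val x).2 * B (val x).1 (val x).2.
have stepA : forall x, `|compound2_entry M x b0| * (rho (sval x).1 * rho (sval x).2) <= fB x.
  case=> -[i j] hij; rewrite /fB /= mulrC; apply: ler_wpM2l.
    by rewrite mulr_ge0 ?ltW.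
  rewrite /B.
  have t : forall (c : bool) (y : R), `|if c then y else 0| = if c then `|y| else 0.
    by case=> y; rewrite ?normr0.
  rewrite -!t.
  set a1 := (if l == j then _ else _); set a2 := (if l == i then _ else _).
  set a3 := (if k == i then _ else _); set a4 := (if k == j then _ else _).
  apply: le_trans (ler_normB _ _) _; rewrite lerD2r.
  apply: le_trans (ler_normD _ _) _; rewrite lerD2r.
  exact: ler_normB.
have stepB : \sum_(x | x != b0) `|compound2_entry M x b0| * (rho (sval x).1 * rho (sval x).2)
   <= \sum_x fB x - fB b0.
  rewrite [X in _ <= X - _](bigD1 b0) //= addrC addrK.
  by apply: ler_sum => x _; apply: stepA.
pose g i := `|M i k| * rho i.
pose h i := `|M i l| * rho i.
have stepC : \sum_x fB x =
   rho l * (\sum_(i : 'I_n) (if (i < l)%N then g i else 0)) + rho l * (\sum_(i : 'I_n) (if (l < i)%N then g i else 0))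
 + rho k * (\sum_(i : 'I_n) (if (k < i)%N then h i else 0)) + rho k * (\sum_(i : 'I_n) (if (i < k)%N then h i else 0)).
  transitivity (\sum_(i : 'I_n) \sum_(j : 'I_n)
     (if (i < j)%N then rho i * rho j * B i j else 0)).
    exact: (sum_idx2 (fun i j => rho i * rho j * B i j)).
  have -> : \sum_(i : 'I_n) \sum_(j : 'I_n) (if (i < j)%N then rho i * rho j * B i j else 0)
    = \sum_(i : 'I_n) \sum_(j : 'I_n) (if (i < j)%N then rho i * rho j * (if l == j then `|M i k| else 0) else 0)
    + \sum_(i : 'I_n) \sum_(j : 'I_n) (if (i < j)%N then rho i * rho j * (if l == i then `|M j k| else 0) else 0)
    + \sum_(i : 'I_n) \sum_(j : 'I_n) (if (i < j)%N then rho i * rho j * (if k == i then `|M j l| else 0) else 0)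
    + \sum_(i : 'I_n) \sum_(j : 'I_n) (if (i < j)%N then rho i * rho j * (if k == j then `|M i l| else 0) else 0).
    rewrite -!big_split; apply: eq_bigr => i _; rewrite -!big_split; apply: eq_bigr => j _ /=.
    by rewrite /B; case: (i < j)%N; rewrite ?mulrDr ?addr0.
  congr (_ + _ + _ + _).
  - rewrite mulr_sumr; apply: eq_bigr => i _.
    rewrite (pick1 (l := l)); last by move=> j ne; rewrite eq_sym (negbTE ne) mulr0; case: ifP.
    by rewrite eqxx /g; case: ifP => _; [ring | rewrite mulr0].
  - rewrite (pick1 (l := l)); last first.
      by move=> i ne; apply: big1 => j _; rewrite eq_sym (negbTE ne) mulr0; case: ifP.
    rewrite mulr_sumr; apply: eq_bigr => j _.
    by rewrite eqxx /g; case: ifP => _; [ring | rewrite mulr0].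
  - rewrite (pick1 (l := k)); last first.
      by move=> i ne; apply: big1 => j _; rewrite eq_sym (negbTE ne) mulr0; case: ifP.
    rewrite mulr_sumr; apply: eq_bigr => j _.
    by rewrite eqxx /h; case: ifP => _; [ring | rewrite mulr0].
  - rewrite mulr_sumr; apply: eq_bigr => i _.
    rewrite (pick1 (l := k)); last by move=> j ne; rewrite eq_sym (negbTE ne) mulr0; case: ifP.
    by rewrite eqxx /h; case: ifP => _; [ring | rewrite mulr0].
have stepD : fB b0 = rho l * g k + rho k * h l.
  by rewrite /fB /B /g /h /= !eqxx lk kl; ring.
have stepE : compound2_entry M b0 b0 = M k k + M l l.
  by rewrite /b0 /compound2_entry /= !eqxx lk kl; ring.
have Wk : \sum_i g i - g k <= M k k * rho k.
  by rewrite (bigD1 k) //= addrC addrK; apply: W.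
have Wl : \sum_i h i - h l <= M l l * rho l.
  by rewrite (bigD1 l) //= addrC addrK; apply: W.
have sg := split_ne g l.
have sh := split_ne h k.
have gl : 0 <= g l by rewrite mulr_ge0 ?normr_ge0 ?ltW.
have hk : 0 <= h k by rewrite mulr_ge0 ?normr_ge0 ?ltW.
have rk := rpos k; have rl := rpos l.
have e1 : rho l * (\sum_i g i - g k) <= rho l * (M k k * rho k) by apply: ler_wpM2l; [exact: ltW | exact: Wk].
have e2 : rho k * (\sum_i h i - h l) <= rho k * (M l l * rho l) by apply: ler_wpM2l; [exact: ltW | exact: Wl].
apply: le_trans stepB _.
rewrite stepC stepD stepE.
set S1 := \sum_(i : 'I_n) (if (i < l)%N then g i else 0).
set S2 := \sum_(i : 'I_n) (if (l < i)%N then g i else 0).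
set S3 := \sum_(i : 'I_n) (if (k < i)%N then h i else 0).
set S4 := \sum_(i : 'I_n) (if (i < k)%N then h i else 0).
have q1 : rho l * S1 + rho l * S2 = rho l * (\sum_i g i - g l) by rewrite -mulrDr sg.
have q2 : rho k * S3 + rho k * S4 = rho k * (\sum_i h i - h k) by rewrite -mulrDr addrC sh.
have q3 : 0 <= rho l * g l by apply: mulr_ge0 => //; exact: ltW.
have q4 : 0 <= rho k * h k by apply: mulr_ge0 => //; exact: ltW.
move: q1 q2 q3 q4 e1 e2.
set G := \sum_i g i; set H := \sum_i h i.
move=> q1 q2 q3 q4 e1 e2.
nra.
Qed.
End Comp.

Lemma eig_tr (F : fieldType) k (M : 'M[F]_k) z :
  eigenvalue M z -> eigenvalue M^T z.
Proof.
case/eigenvalueP => v vM vnz.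
have : \det (M - z%:M) == 0.
  apply/det0P; exists v => //.
  by rewrite mulmxBr vM mul_mx_scalar subrr.
rewrite -det_tr linearB /= tr_scalar_mx => /det0P [w wnz wM].
apply/eigenvalueP; exists w => //.
by move: wM; rewrite mulmxBr mul_mx_scalar => /eqP; rewrite subr_eq0 => /eqP.
Qed.

Lemma eig_comm (F : fieldType) p q (X : 'M[F]_(p, q)) (Y : 'M[F]_(q, p)) z :
  z != 0 -> eigenvalue (X *m Y) z -> eigenvalue (Y *m X) z.
Proof.
move=> zn0 /eigenvalueP [v vM vnz].
apply/eigenvalueP; exists (v *m X).
  by rewrite mulmxA -(mulmxA v) vM -scalemxAl.
apply: contra vnz => /eqP vX0.
move: vM; rewrite mulmxA vX0 mul0mx => /eqP; rewrite eq_sym scaler_eq0.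
by rewrite (negbTE zn0).
Qed.

Unset Implicit Arguments.

Theorem theorem6p2 (R : realType) (n m : nat) (A : 'M[R]_(n, m)) :
  (2 <= n)%N -> dsr_steady A A^T ->
  ((forall j : 'I_m, #|[set i : 'I_n | A i j != 0%R]| <= 2)%N ->
     forall B : 'M[R]_(m, n), signQ0 A^T B ->
       [/\ P0_matrix (A *m B), P0_matrix (compound2 (A *m B))
         & pos_semistable (A *m B)]) /\
  ((forall i : 'I_n, #|[set j : 'I_m | A i j != 0%R]| <= 2)%N ->
     forall B : 'M[R]_(m, n), signQ0 A^T B -> pos_semistable (A *m B)).
Proof.
move=> _ st.
have [rho [sig [rpos spos scal]]] := steady_scalable st.
split.
  move=> col B sB.
  have HW := W_AB rpos spos scal col sB.
  split; first exact: W_P0 HW.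
    exact: W_P0 (W_comp HW).
  move=> z /eigenvalueP [v veq vnz].
  exact: gersh HW vnz veq.
move=> row B sB.
have scal' : forall j i, A^T j i != 0 -> `|A^T j i| * sig j * rho i = 1.
  by move=> j i; rewrite mxE => nz; rewrite mulrAC scal.
have col' : forall i, (#|[set j | A^T j i != 0%R]| <= 2)%N.
  move=> i; rewrite (eq_card (B := [set j | A i j != 0%R])) ?row // => j.
  by rewrite !inE mxE.
have sB' : signQ0 A^T^T B^T.
  by move=> j i; rewrite !mxE; have := sB i j; rewrite mxE.
have HW := W_AB spos rpos scal' col' sB'.
move=> z ez.
have [->|zn0] := eqVneq z 0; first by rewrite lexx.
have ez' : eigenvalue (map_mx (real_complex R) (A^T *m B^T)) z.
  rewrite map_mxM; apply: eig_comm zn0 _.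
  rewrite -!map_trmx -trmx_mul -map_mxM.
  exact: eig_tr.
case/eigenvalueP: ez' => v veq vnz.
exact: gersh HW vnz veq.
Qed.
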